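(* Let $k\ge2$ be even, $\alpha_1,\dots,\alpha_k$ positive integers, and $G=C(\alpha_1,\dots,\alpha_k)$. Then the clique number of $G$ is $$\omega(G)=\max_{1\le i\le k/2}\Big\{\alpha_{2i-1}+\Big(\frac{k}{2}-i+1\Big)\Big\}.$$
   Context: $C(\alpha_1,\dots,\alpha_k)$ is defined recursively by $C(\alpha_1)=\overline{K_{\alpha_1}}$ (edgeless graph) and $C(\alpha_1,\dots,\alpha_i)=\overline{C(\alpha_1,\dots,\alpha_{i-1})\cup K_{\alpha_i}}$ for $i=2,\dots,k$ (disjoint union, then complement). Equivalently for $k$ even, with $\pi_i$ the $\alpha_i$ vertices introduced at step $i$: $\pi_i$ is a clique for $i$ odd, independent for $i$ even, and for $i<j$ vertices of $\pi_i,\pi_j$ are adjacent iff $j$ is even. $\omega(G)$ is the maximum size of a clique in $G$. *)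

(* Defs.v *)
From mathcomp Require Import all_boot.
Set Implicit Arguments. Unset Strict Implicit. Unset Printing Implicit Defensive.

(* Levels (steps) are 0-indexed: level p corresponds to the paper's pi_{p+1}.
   cadj s p q = adjacency, in C(alpha_1,...,alpha_{s+1}), between two DISTINCT
   vertices introduced at steps p and q (p, q <= s), following the recursive
   definition: C(alpha_1) is edgeless; C(..., alpha_{s+1}) is the complement of
   (C(...,alpha_s) disjoint-union K_{alpha_{s+1}}). *)
Fixpoint cadj (s p q : nat) : bool :=
  match s with
  | 0 => false
  | s'.+1 =>
      if (p == s) && (q == s) then false          (* inside K_alpha, complemented *)
      else if (p == s) || (q == s) then true      (* no edge in union, complemented *)
      else ~~ cadj s' p q                         (* old edge, complemented *)
  end.

Definition cvert (k : nat) (a : nat -> nat) : finType := {i : 'I_k & 'I_(a i)}.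

Definition cgraph_adj (k : nat) (a : nat -> nat) (u v : cvert k a) : bool :=
  (u != v) && cadj k.-1 (val (tag u)) (val (tag v)).

Definition is_clique (T : finType) (e : rel T) (S : {set T}) : bool :=
  [forall u in S, forall v in S, (u != v) ==> e u v].

Definition clique_number (T : finType) (e : rel T) : nat :=
  \max_(S : {set T} | is_clique e S) #|S|.

(* Main.v *)
Require Import Defs.
From mathcomp Require Import all_boot zify.
Lemma cadjE s p q : p <= s -> q <= s ->
  cadj s p q = if p == q then odd (s - p) else ~~ odd (s - maxn p q).
Proof.
elim: s p q => [|s IH] p q hp hq /=.
  have -> : p = 0 by lia. have -> : q = 0 by lia. by [].
case: (eqVneq p s.+1) => [->|hps]; case: (eqVneq q s.+1) => [->|hqs] /=.
- by rewrite subnn.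
- have -> : maxn s.+1 q = s.+1 by lia. rewrite subnn. case: (s.+1 =P q) => //; lia.
- have -> : maxn p s.+1 = s.+1 by lia. rewrite subnn. case: (p =P s.+1) => //; lia.
- rewrite IH; try lia. case: ifP => _.
  + by rewrite subSn ?oddS //; lia.
  + rewrite subSn ?oddS //; lia.
Qed.

Lemma adjE k a (u v : cvert k a) : odd k.-1 ->
  cgraph_adj u v = (u != v) &&
    (if tag u == tag v then ~~ odd (tag u) else odd (maxn (tag u) (tag v))).
Proof.
move=> hs; rewrite /cgraph_adj.
have hu : val (tag u) < k := ltn_ord _. have hv : val (tag v) < k := ltn_ord _.
rewrite cadjE; last lia; last lia.
have h1 : val (tag u) <= k.-1 by lia.
have h2 : maxn (val (tag u)) (val (tag v)) <= k.-1 by lia.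
rewrite (oddB h1) (oddB h2) hs /=.
by rewrite negbK.
Qed.

Lemma level_card k a (t : 'I_k) : #|[set u : cvert k a | tag u == t]| = a t.
Proof.
have -> : [set u : cvert k a | tag u == t] =
   [set Tagged (fun i : 'I_k => 'I_(a i)) j | j : 'I_(a t)].
  apply/setP => u; rewrite inE; apply/idP/imsetP.
  - case: u => t' j /= ht. have {}ht : t' = t by apply/eqP. subst t'. by exists j.
  - by case=> j _ ->.
rewrite card_in_imset ?card_ord //.
move=> j1 j2 _ _ h. exact: eq_from_Tagged h.
Qed.
Lemma cnt_odd n m : #|[set t : 'I_n | (m < t) && odd t]| = n./2 - m.+1./2.
Proof.
rewrite -sum1dep_card big_mkcond /=.
elim: n => [|n IH]; first by rewrite big_ord0.
rewrite big_ord_recr /= IH.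
have h1 := odd_double_half n. have h2 := odd_double_half n.+1.
have h3 := odd_double_half m.+1. rewrite /= in h2.
case: (ltnP m n) => hmn /=; case: (odd n) h1 h2 => /= h1 h2; lia.
Qed.

Lemma inj_card k a (A : {set cvert k a}) (B : {set 'I_k}) :
  {in A &, injective (fun u : cvert k a => tag u)} ->
  (forall u, u \in A -> tag u \in B) -> #|A| <= #|B|.
Proof.
move=> hinj hB. rewrite -(card_in_imset hinj). apply: subset_leq_card.
by apply/subsetP => _ /imsetP [u hu ->]; apply: hB.
Qed.

Lemma oddmax (p q : nat) : odd p -> odd q -> odd (maxn p q).
Proof.
move=> hp hq; by case: (leqP p q).
Qed.

Theorem theorem5p1 (k : nat) (a : nat -> nat) :
  2 <= k -> ~~ odd k -> (forall i, i < k -> 0 < a i) ->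
  clique_number (@cgraph_adj k a) =
  \max_(i < k./2) (a i.*2 + (k./2 - i)).
Proof.
move=> hk hev ha.
have hs : odd k.-1 by move: hk hev; case: k ha => // k' _ _ /=; rewrite negbK.
have ek : k./2.*2 = k by rewrite halfK (negbTE hev) subn0.
have hk2 : 0 < k./2 by rewrite -(ltn_double) ek; case: k hk {hev hs ha ek}.
rewrite /clique_number.
apply/eqP; rewrite eqn_leq; apply/andP; split.
- apply/bigmax_leqP => S hS.
  have adj : forall u v, u \in S -> v \in S -> u != v -> cgraph_adj u v.
    move=> u v hu hv huv. move/forallP: hS => /(_ u). rewrite hu /=.
    move/forallP => /(_ v). by rewrite hv huv.
  case: (set_0Vmem S) => [->|[w0 hw0]]; first by rewrite cards0.
  case: (arg_minnP (fun u : cvert k a => val (tag u)) hw0) => w hw hmin.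
  set m := tag w.
  have key : forall u, u \in S -> tag u != m -> m < tag u /\ odd (tag u).
    move=> u hu hne.
    have hle := hmin u hu.
    have hlt : m < tag u.
      rewrite ltn_neqAle hle andbT. by rewrite eq_sym.
    split => //.
    have huw : w != u by apply: contra hne => /eqP <-.
    have := adj w u hw hu huw. rewrite adjE // huw /= (negbTE (_ : tag w != tag u)); last by rewrite eq_sym.
    by rewrite (elimT maxn_idPr (ltnW hlt)).
  have injodd : forall u v, u \in S -> v \in S -> tag u = tag v -> odd (tag u) -> u = v.
    move=> u v hu hv heq ho. apply/eqP; apply/negPn/negP => hne.
    have := adj u v hu hv hne. by rewrite adjE // hne heq eqxx /= -heq ho.
  case: (boolP (odd m)) => hm.
  + have allodd : forall u, u \in S -> odd (tag u).
      move=> u hu. case: (eqVneq (tag u) m) => [->//|hne]. by case: (key u hu hne).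
    have h : #|S| <= #|[set t : 'I_k | (0 < t) && odd t]|.
      apply: inj_card.
      * move=> u v hu hv heq. apply: injodd => //. exact: allodd.
      * move=> u hu; rewrite inE allodd // andbT.
        by case: (val (tag u)) (allodd u hu).
    rewrite cnt_odd /= in h. apply: (leq_trans h).
    apply: leq_trans (leq_bigmax (Ordinal hk2)). rewrite /= subn0. exact: leq_addl.
  + rewrite -(cardsID [set u | tag u == m] S).
    have h1 : #|S :&: [set u | tag u == m]| <= a m.
      rewrite -(@level_card k a m). apply: subset_leq_card. exact: subsetIr.
    have h2 : #|S :\: [set u | tag u == m]| <= #|[set t : 'I_k | (m < t) && odd t]|.
      apply: inj_card.
      * move=> u v; rewrite !inE => /andP [hu1 hu2] /andP [hv1 hv2] heq.
        apply: injodd => //. by case: (key u hu2 hu1).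
      * move=> u; rewrite !inE => /andP [hu1 hu2]. case: (key u hu2 hu1) => -> -> //.
    rewrite cnt_odd in h2.
    have e1 : m./2.*2 = m by rewrite halfK (negbTE hm) subn0.
    have e2 : m.+1./2 = m./2 by rewrite /= uphalf_half (negbTE hm).
    have hi : m./2 < k./2 by rewrite -ltn_double e1 ek.
    apply: leq_trans (leq_add h1 h2) _.
    apply: leq_trans _ (leq_bigmax (Ordinal hi)). by rewrite /= e1 uphalf_half (negbTE hm).
- have hc : 0 < #|'I_k./2| by rewrite card_ord.
  case: (eq_bigmax (fun i : 'I_k./2 => a i.*2 + (k./2 - i)) hc) => i e; rewrite e {e}.
  have ht : i.*2 < k by have := ltn_ord i; rewrite -ltn_double ek.
  set t := Ordinal ht.
  pose f := fun t' : 'I_k => Tagged (fun i : 'I_k => 'I_(a i)) (Ordinal (ha t' (ltn_ord t'))).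
  pose T := [set t' : 'I_k | (t < t') && odd t'].
  pose S := [set u | tag u == t] :|: f @: T.
  have hS : is_clique (@cgraph_adj k a) S.
    apply/forallP => u; apply/implyP => hu; apply/forallP => v; apply/implyP => hv.
    apply/implyP => huv. rewrite adjE // huv /=.
    have ot : ~~ odd t by rewrite /= odd_double.
    rewrite !inE in hu hv.
    case/orP: hu => [/eqP hu | /imsetP [t1 ht1 hu]]; case/orP: hv => [/eqP hv | /imsetP [t2 ht2 hv]].
    * by rewrite hu hv eqxx.
    * rewrite hu hv /=. rewrite inE in ht2. case/andP: ht2 => h1 h2.
      rewrite (negbTE (_ : t != t2)); last by rewrite neq_ltn h1.
      by rewrite (elimT maxn_idPr (ltnW h1)).
    * rewrite hu hv /=. rewrite inE in ht1. case/andP: ht1 => h1 h2.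
      rewrite (negbTE (_ : t1 != t)); last by rewrite neq_ltn h1 orbT.
      by rewrite (elimT maxn_idPl (ltnW h1)).
    * rewrite hu hv /=. rewrite !inE in ht1 ht2.
      move: ht1 ht2 => /andP [_ h1] /andP [_ h2].
      case: (eqVneq t1 t2) => [e|ne].
        by move: huv; rewrite hu hv e eqxx.
      exact: oddmax.
  apply: leq_trans (leq_bigmax_cond S hS).
  rewrite cardsU.
  have -> : [set u | tag u == t] :&: f @: T = set0.
    apply/setP => u; rewrite !inE. apply/negbTE/negP => /andP [/eqP hu /imsetP [t' ht' e]].
    rewrite e /= in hu. rewrite hu inE ltnn in ht'. by [].
  rewrite cards0 subn0 level_card card_in_imset; last first.
    by move=> t1 t2 _ _ /(congr1 (fun u : cvert k a => tag u)).
  by rewrite cnt_odd /= uphalf_half odd_double doubleK.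
Qed.
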